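(* Let $m\geq 3$ and let $S(m)$ be the star with center $r$ and leaves $1,2,\dots,m$, with variables $x_r,x_1,\dots,x_m$. Then $\gamma(S(m))=2$; for each $1\leq k\leq m-2$, \[ I_{2+k}(S(m),X)=\left\langle \prod_{s=1}^k x_{j_s}\;\middle|\; 1\leq j_1<\cdots<j_k\leq m\right\rangle; \] and \[ I_{m+1}(S(m),X)=\Big\langle x_rx_1\cdots x_m-\sum_{i=1}^m \prod_{j\neq i} x_j\Big\rangle. \]
   Context: For a graph $G$ with vertex set $V$, $L(G,X_G)$ is the matrix with diagonal entries $x_u$ ($u\in V$) and off-diagonal entries $-m_{uv}$, $m_{uv}$ the number of edges between $u$ and $v$; $I_j(G,X_G)\subseteq\mathbb{Z}[X_G]$ is the ideal generated by all $j\times j$ minors of $L(G,X_G)$, and $\gamma(G)=\max\{j\mid I_j(G,X_G)=\mathbb{Z}[X_G]\}$. *)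

(* Defs.v *)
From HB Require Import structures.
From mathcomp Require Import all_boot all_order all_algebra.
From mathcomp Require Import mpoly.
Set Implicit Arguments. Unset Strict Implicit. Unset Printing Implicit Defensive.
Import GRing.Theory.
Local Open Scope ring_scope.

Definition in_ideal (R : comRingType) (gens : R -> Prop) (p : R) : Prop :=
  exists s : seq (R * R),
    (forall q, q \in s -> gens q.2) /\ p = \sum_(q <- s) q.1 * q.2.

Definition ideal_eq (R : comRingType) (A B : R -> Prop) : Prop :=
  forall p, in_ideal A p <-> in_ideal B p.

Definition genLap (n : nat) (mult : 'I_n -> 'I_n -> nat) : 'M[{mpoly int[n]}]_n :=
  \matrix_(u, v) (if u == v then 'X_u else - (mult u v)%:R).

Definition is_minor (R : comRingType) (n j : nat) (A : 'M[R]_n) (p : R) : Prop :=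
  exists (f g : 'I_j -> 'I_n),
    (forall a b : 'I_j, (a < b)%N -> (f a < f b)%N) /\
    (forall a b : 'I_j, (a < b)%N -> (g a < g b)%N) /\
    p = \det (mxsub f g A).

Definition Iminors (n : nat) (mult : 'I_n -> 'I_n -> nat) (j : nat) :
  {mpoly int[n]} -> Prop := in_ideal (is_minor j (genLap mult)).

(* An ideal is the whole ring iff it contains 1. *)
Definition ideal_trivial (n : nat) (mult : 'I_n -> 'I_n -> nat) (j : nat) : Prop :=
  Iminors mult j 1.

Definition gamma_is (n : nat) (mult : 'I_n -> 'I_n -> nat) (g : nat) : Prop :=
  ideal_trivial mult g /\ forall j, (g < j)%N -> ~ ideal_trivial mult j.

(* The star S(m): vertex set 'I_(m.+1), vertex 0 is the center r, vertex
   (lift ord0 i) = i.+1 is the leaf i+1 (for i : 'I_m).  Exactly one edge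
   between the center and each leaf, no other edges. *)
Definition star_mult (m : nat) (u v : 'I_m.+1) : nat :=
  ((u == ord0) != (v == ord0) : bool).

Definition xr (m : nat) : {mpoly int[m.+1]} := 'X_ord0.
Definition xleaf (m : nat) (i : 'I_m) : {mpoly int[m.+1]} := 'X_(lift ord0 i).

(* Main.v *)
Require Import Defs.
From HB Require Import structures.
From mathcomp Require Import all_boot all_order all_algebra.
From mathcomp Require Import mpoly.
From mathcomp Require Import fingroup perm zify.
Import GRing.Theory.
Local Open Scope ring_scope.
Set Implicit Arguments. Unset Strict Implicit. Unset Printing Implicit Defensive.
Section Ideal.
Variable R : comNzRingType.
Implicit Types (G H : R -> Prop).

Lemma in_ideal0 G : in_ideal G 0.
Proof. by exists [::]; split => //; rewrite big_nil. Qed.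

Lemma in_ideal_gen G p : G p -> in_ideal G p.
Proof.
move=> Gp; exists [:: (1, p)]; split; first by move=> q; rewrite inE => /eqP ->.
by rewrite big_seq1 mul1r.
Qed.

Lemma in_idealD G p q : in_ideal G p -> in_ideal G q -> in_ideal G (p + q).
Proof.
move=> [s [Hs ->]] [t [Ht ->]]; exists (s ++ t); split; last by rewrite big_cat.
by move=> r; rewrite mem_cat => /orP[/Hs|/Ht].
Qed.

Lemma in_idealM G c p : in_ideal G p -> in_ideal G (c * p).
Proof.
move=> [s [Hs ->]]; exists (map (fun q => (c * q.1, q.2)) s); split.
  by move=> r /mapP [q qs] ->; exact: (Hs q qs).
rewrite big_map mulr_sumr; apply: eq_bigr => q _ /=; by rewrite mulrA.
Qed.

Lemma in_idealMr G c p : in_ideal G p -> in_ideal G (p * c).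
Proof. by rewrite mulrC; apply: in_idealM. Qed.

Lemma in_idealN G p : in_ideal G p -> in_ideal G (- p).
Proof. by move=> h; rewrite -mulN1r; apply: in_idealM. Qed.

Lemma in_ideal_sum G (I : finType) (P : pred I) (F : I -> R) :
  (forall i, P i -> in_ideal G (F i)) -> in_ideal G (\sum_(i | P i) F i).
Proof.
move=> h; apply: (big_ind (in_ideal G)); [exact: in_ideal0|exact: in_idealD|exact: h].
Qed.

Lemma in_ideal_trans G H p :
  (forall q, G q -> in_ideal H q) -> in_ideal G p -> in_ideal H p.
Proof.
move=> hGH [s [Hs ->]]; elim: s Hs => [|q s IH] Hs; first by rewrite big_nil; exact: in_ideal0.
rewrite big_cons; apply: in_idealD; last by apply: IH => r rs; apply: Hs; rewrite inE rs orbT.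
by apply: in_idealM; apply: hGH; apply: Hs; rewrite inE eqxx.
Qed.

End Ideal.
Lemma incr_inj n s (f : 'I_s -> 'I_n) :
  (forall a b : 'I_s, (a < b)%N -> (f a < f b)%N) -> injective f.
Proof.
move=> h a b e; case: (ltngtP a b) => [/h|/h|/val_inj //]; by rewrite e ltnn.
Qed.

Lemma enum_val_incr n (X : {set 'I_n}) (a b : 'I_#|X|) :
  (a < b)%N -> (enum_val a < enum_val b)%N.
Proof.
move=> ab; have x0 : 'I_n := enum_val a.
rewrite !(enum_val_nth x0).
have hs : sorted (fun x y : 'I_n => (x < y)%N) (enum X).
  rewrite /enum_mem -enumT; apply: sorted_filter.
    by move=> y x z; apply: ltn_trans.
  by have := iota_ltn_sorted 0 n; rewrite -val_enum_ord sorted_map.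
have htr : transitive (fun x y : 'I_n => (x < y)%N) by move=> y x z; apply: ltn_trans.
have := sorted_ltn_nth htr x0 hs; apply => //;
  by rewrite inE -cardE ltn_ord.
Qed.

Lemma sort_inj n s (f : 'I_s -> 'I_n) : injective f ->
  exists f' : 'I_s -> 'I_n, exists p : 'S_s,
   (forall a b : 'I_s, (a < b)%N -> (f' a < f' b)%N) /\ forall i, f i = f' (p i).
Proof.
move=> finj.
pose X := f @: [set: 'I_s].
have hX : #|X| = s by rewrite card_imset // cardsT card_ord.
pose f' (i : 'I_s) := enum_val (cast_ord (esym hX) i).
have fX i : f i \in X by apply: imset_f; rewrite inE.
pose pf (i : 'I_s) := cast_ord hX (enum_rank_in (fX i) (f i)).
have f'pf i : f' (pf i) = f i by rewrite /f' /pf cast_ordK enum_rankK_in.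
have pfinj : injective pf by move=> a b e; apply: finj; rewrite -!f'pf e.
exists f', (perm pfinj); split.
  by move=> a b ab; apply: enum_val_incr.
by move=> i; rewrite permE f'pf.
Qed.

Lemma det_mxsub_perm (R : comNzRingType) n s (A : 'M[R]_n) (f g : 'I_s -> 'I_n)
  (p q : 'S_s) :
  \det (mxsub (f \o p) (g \o q) A) = (-1) ^+ p * (-1) ^+ (q^-1)%g * \det (mxsub f g A).
Proof.
have -> : mxsub (f \o p) (g \o q) A = row_perm p (col_perm q (mxsub f g A)).
  by apply/matrixP => i j; rewrite !mxE.
by rewrite row_permE col_permE !det_mulmx !det_perm mulrA mulrAC.
Qed.

Lemma inj_minor (R : comNzRingType) n s (A : 'M[R]_n) (f g : 'I_s -> 'I_n) :
  injective f -> injective g -> in_ideal (is_minor s A) (\det (mxsub f g A)).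
Proof.
move=> fi gi; have [f' [p [f'inc fE]]] := sort_inj fi.
have [g' [q [g'inc gE]]] := sort_inj gi.
have -> : mxsub f g A = mxsub (f' \o p) (g' \o q) A.
  by apply/matrixP => i j; rewrite !mxE /= fE gE.
rewrite det_mxsub_perm; apply: in_idealM; apply: in_ideal_gen; by exists f', g'.
Qed.
Section Star.
Variable m : nat.
Local Notation P := {mpoly int[m.+1]}.
Local Notation A := (genLap (@star_mult m)).

Lemma AE (u v : 'I_m.+1) :
  A u v = if u == v then 'X_u else if (u == ord0) != (v == ord0) then -1 else 0.
Proof.
rewrite /genLap mxE /star_mult; case: eqP => // _.
by case: (_ != _) => /=; rewrite ?oppr0.
Qed.

Lemma AEdiag (u : 'I_m.+1) : A u u = 'X_u.
Proof. by rewrite AE eqxx. Qed.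

Lemma AE0 (u v : 'I_m.+1) : u != v -> u != ord0 -> v != ord0 -> A u v = 0.
Proof. by move=> uv u0 v0; rewrite AE (negPf uv) (negPf u0) (negPf v0). Qed.

Definition kprods (k : nat) : P -> Prop :=
  fun p => exists S : {set 'I_m}, #|S| = k /\ p = \prod_(i in S) xleaf i.

Lemma card_preim1 s (h : 'I_s -> 'I_m.+1) (y : 'I_m.+1) : injective h ->
  (#|h @^-1: [set y]| <= 1)%N.
Proof.
move=> hi; rewrite -(card_imset _ hi) -(cards1 y); apply: subset_leq_card.
by apply/subsetP => z /imsetP [x xin ->]; move: xin; rewrite !inE.
Qed.

Lemma sub_card (T : finType) (D : {set T}) k : (k <= #|D|)%N ->
  exists D' : {set T}, D' \subset D /\ #|D'| = k.
Proof.
move=> hk; exists [set x in take k (enum D)]; split.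
  by apply/subsetP => x; rewrite inE => /mem_take; rewrite mem_enum.
rewrite cardsE; apply/eqP; move/card_uniqP: (take_uniq k (enum_uniq (mem D))) => ->.
by rewrite size_takel // -cardE.
Qed.

Lemma term_in (j0 : 'I_m) k (h1 h2 : 'I_(k.+2) -> 'I_m.+1) :
  injective h1 -> injective h2 -> in_ideal (kprods k) (\prod_i A (h1 i) (h2 i)).
Proof.
move=> i1 i2.
pose D := [set i | (h1 i == h2 i) && (h1 i != ord0)].
case: (leqP k #|D|) => hD.
  have [D' [sD cD]] := sub_card hD.
  pose phi (i : 'I_k.+2) := odflt j0 (unlift ord0 (h1 i)).
  have phiE i : i \in D -> lift ord0 (phi i) = h1 i.
    rewrite inE => /andP[_ ne]; rewrite /phi; case: unliftP ne => [j -> //|->].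
    by rewrite eqxx.
  have phiinj : {in D' &, injective phi}.
    move=> a b aD bD e; apply: i1.
    by rewrite -(phiE a (subsetP sD a aD)) -(phiE b (subsetP sD b bD)) e.
  rewrite (bigID (mem D')) /= mulrC; apply: in_idealM; apply: in_ideal_gen.
  exists (phi @: D'); split; first by rewrite card_in_imset.
  rewrite big_imset //=; apply: eq_bigr => i iD'; have iD := subsetP sD i iD'.
  rewrite /xleaf phiE //; move: iD; rewrite inE => /andP[/eqP <- _].
  by rewrite AEdiag.
have [i Hi] : exists i, [&& (i \notin D), (h1 i != ord0) & (h2 i != ord0)].
  apply/existsP; apply: contraTT hD => /existsPn H; rewrite -leqNgt.
  have sub : [set: 'I_k.+2] \subset D :|: h1 @^-1: [set ord0] :|: h2 @^-1: [set ord0].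
    apply/subsetP => x _; move: (H x); rewrite !inE.
    by move: (h1 x == h2 x) (h1 x == ord0) (h2 x == ord0) => [] [] [].
  move: (subset_leq_card sub); rewrite cardsT card_ord => hle.
  have h2' := card_preim1 ord0 i2; have h1' := card_preim1 ord0 i1.
  have u1 := cardsU D (h1 @^-1: [set ord0]).
  have u2 := cardsU (D :|: h1 @^-1: [set ord0]) (h2 @^-1: [set ord0]).
  have e1 : (#|D :|: h1 @^-1: [set ord0]| <= #|D| + 1)%N.
    by rewrite u1; apply: leq_trans (leq_subr _ _) _; rewrite leq_add2l.
  have e2 : (#|D :|: h1 @^-1: [set ord0] :|: h2 @^-1: [set ord0]| <= #|D| + 1 + 1)%N.
    by rewrite u2; apply: leq_trans (leq_subr _ _) _; apply: leq_add.
  by have := leq_trans hle e2; rewrite !addn1 ltnS ltnS.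
rewrite (bigD1 i) //= AE0 ?mul0r; first exact: in_ideal0.
- move: Hi; rewrite inE negb_and !negbK => /and3P [/orP [//|/eqP ->] ].
  by rewrite eqxx.
- by case/and3P: Hi.
- by case/and3P: Hi.
Qed.

Lemma minor_in (j0 : 'I_m) k (p : P) : is_minor k.+2 A p -> in_ideal (kprods k) p.
Proof.
move=> [f [g [fi [gi ->]]]]; rewrite /determinant; apply: in_ideal_sum => s _.
apply: in_idealM.
have -> : \prod_i (mxsub f g A) i (s i) = \prod_i A (f i) ((g \o s) i).
  by apply: eq_bigr => i _; rewrite mxE.
apply: term_in => //; first exact: incr_inj.
by apply: inj_comp; [exact: incr_inj|exact: perm_inj].
Qed.

End Star.
Section Star2.
Variable m : nat.
Local Notation P := {mpoly int[m.+1]}.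
Local Notation A := (genLap (@star_mult m)).

Lemma nl0 (x : 'I_m) : (lift ord0 x == ord0 :> 'I_m.+1) = false.
Proof. by apply/negbTE; rewrite eq_sym; exact: (@neq_lift m.+1 ord0 x). Qed.

Lemma nl0' (x : 'I_m) : (ord0 == lift ord0 x :> 'I_m.+1) = false.
Proof. by rewrite eq_sym nl0. Qed.

Lemma AEll (x y : 'I_m) : x != y -> A (lift ord0 x) (lift ord0 y) = 0.
Proof.
move=> xy; apply: AE0; first by apply: contra xy => /eqP/lift_inj ->.
  by rewrite nl0.
by rewrite nl0.
Qed.

Lemma AE0l (x : 'I_m) : A ord0 (lift ord0 x) = -1.
Proof. by rewrite AE nl0' nl0 eqxx. Qed.

Lemma AEl0 (x : 'I_m) : A (lift ord0 x) ord0 = -1.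
Proof. by rewrite AE nl0 eqxx. Qed.

Definition shape k (u v : 'I_m.+1) (e : nat -> 'I_m) (i : 'I_k.+2) : 'I_m.+1 :=
  if (i == 0 :> nat) then u else if (i == k.+1 :> nat) then v else lift ord0 (e i.-1).

Arguments shape : clear implicits.

Lemma shape_inj k (u v : 'I_m.+1) (e : nat -> 'I_m) :
  u != v -> (forall t, (t < k)%N -> lift ord0 (e t) != u) ->
  (forall t, (t < k)%N -> lift ord0 (e t) != v) ->
  (forall t t', (t < k)%N -> (t' < k)%N -> e t = e t' -> t = t') ->
  injective (shape k u v e).
Proof.
move=> uv eu ev ei [i hi] [j hj]; rewrite /shape /= => E; apply/val_inj => /=.
have lt1 (x : nat) : (x < k.+2)%N -> x != 0%N -> x != k.+1 -> (x.-1 < k)%N.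
  by move=> ? ? ?; lia.
move: E; case: (i =P 0%N) => [->|i0]; case: (j =P 0%N) => [->//|j0].
- case: (j =P k.+1) => [_ /eqP|jk E]; first by rewrite (negPf uv).
  by move: (eu _ (lt1 _ hj (introN eqP j0) (introN eqP jk))); rewrite -E eqxx.
- case: (i =P k.+1) => [_ E|ik E].
    by move: uv; rewrite E eqxx.
  by move: (eu _ (lt1 _ hi (introN eqP i0) (introN eqP ik))); rewrite E eqxx.
case: (i =P k.+1) => [->|ik]; case: (j =P k.+1) => [->//|jk].
- move=> E; by move: (ev _ (lt1 _ hj (introN eqP j0) (introN eqP jk))); rewrite -E eqxx.
- move=> E; by move: (ev _ (lt1 _ hi (introN eqP i0) (introN eqP ik))); rewrite E eqxx.
move/lift_inj/ei => E.
have := E (lt1 _ hi (introN eqP i0) (introN eqP ik)) (lt1 _ hj (introN eqP j0) (introN eqP jk)).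
lia.
Qed.

End Star2.
Arguments shape {m} k u v e i.
Section Star3.
Variable m : nat.
Local Notation P := {mpoly int[m.+1]}.
Local Notation A := (genLap (@star_mult m)).

Lemma prod_in k (S : {set 'I_m}) : #|S| = k -> (k.+2 <= m)%N ->
  in_ideal (is_minor k.+2 A) (\prod_(i in S) xleaf i).
Proof.
move=> cS km.
have cC : (1 < #|~: S|)%N by have := cardsC S; rewrite card_ord cS; lia.
have [a aC] : exists a, a \in ~: S by apply/card_gt0P; lia.
have [b bC] : exists b, b \in ~: S :\ a.
  by apply/card_gt0P; move: cC; rewrite (cardsD1 a) aC; lia.
move: bC; rewrite !inE => /andP [ba bS]; move: aC; rewrite inE => aS.
pose e t := nth a (enum S) t.
have hsz : size (enum S) = k by rewrite -cardE.
have eS t : (t < k)%N -> e t \in S by move=> ht; rewrite -mem_enum mem_nth ?hsz.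
have ei : forall t t', (t < k)%N -> (t' < k)%N -> e t = e t' -> t = t'.
  move=> t t' ht ht' E; apply/eqP.
  by rewrite -(nth_uniq a _ _ (enum_uniq (mem S))) ?hsz //; apply/eqP.
pose f := shape k (lift ord0 a) ord0 e.
pose g := shape k ord0 (lift ord0 b) e.
have fi : injective f.
  apply: shape_inj; first by rewrite nl0.
  - move=> t ht; apply/eqP => /lift_inj E; move: aS; rewrite -E eS //.
  - by move=> t ht; rewrite nl0.
  - exact: ei.
have gi : injective g.
  apply: shape_inj; first by rewrite nl0'.
  - by move=> t ht; rewrite nl0.
  - move=> t ht; apply/eqP => /lift_inj E; move: bS; rewrite -E eS //.
  - exact: ei.
have tr : is_trig_mx (mxsub f g A).
  apply/is_trig_mxP => i j ij; rewrite mxE /f /g /shape.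
  have hjk := ltn_ord j.
  have hj0 : (j == 0 :> nat) = false by apply/negbTE; lia.
  case: (nat_of_ord i =P 0%N) => [i0|i0].
    rewrite hj0; case: (nat_of_ord j =P k.+1) => jk; apply: AEll; first by rewrite eq_sym.
    by apply/eqP => E; move: aS; rewrite E eS //; lia.
  have hik : (i == k.+1 :> nat) = false by apply/negbTE; lia.
  rewrite hik hj0; case: (nat_of_ord j =P k.+1) => jk; apply: AEll.
    by apply/eqP => E; move: bS; rewrite -E eS //; lia.
  apply/eqP => E; have := ei _ _ _ _ E; lia.
have hdet : \det (mxsub f g A) = \prod_(i in S) xleaf i.
  have mE i : mxsub f g A i i = A (f i) (g i) by rewrite mxE.
  rewrite (det_trig tr) big_ord_recl big_ord_recr /= !mE.
  have -> : f ord0 = lift ord0 a by [].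
  have -> : g ord0 = ord0 by [].
  have -> : f (lift ord0 ord_max) = ord0.
    by rewrite /f /shape /= /bump leq0n add1n /= eqxx.
  have -> : g (lift ord0 ord_max) = lift ord0 b.
    by rewrite /g /shape /= /bump leq0n add1n /= eqxx.
  rewrite AEl0 AE0l mulN1r mulrN1 opprK.
  rewrite -[in RHS]big_enum (big_nth a) hsz big_mkord.
  apply: eq_bigr => i _.
  have hi : (bump 0 i == k.+1) = false.
    by rewrite /bump leq0n add1n eqSS ltn_eqF.
  by rewrite mE /f /g /shape /= hi add0n AEdiag.
rewrite -hdet; exact: inj_minor.
Qed.


End Star3.
Section Star4.
Variable m : nat.
Local Notation P := {mpoly int[m.+1]}.
Local Notation A := (genLap (@star_mult m)).

Lemma term_zero (s : 'S_m.+1) (i : 'I_m.+1) :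
  i != ord0 -> s i != ord0 -> s i != i -> \prod_j A j (s j) = 0.
Proof.
by move=> i0 si0 sii; rewrite (bigD1 i) //= AE0 ?mul0r // eq_sym.
Qed.

Definition Tset : {set 'S_m.+1} := [set tperm ord0 (lift ord0 l) | l : 'I_m].

Lemma term_zero2 (s : 'S_m.+1) :
  s != 1%g -> s \notin Tset -> \prod_j A j (s j) = 0.
Proof.
move=> s1 sT.
case: (s ord0 =P ord0) => [s0|s0].
  case: (pickP (fun i => s i != i)) => [i hi|H]; last first.
    by case/eqP: s1; apply/permP => i; rewrite perm1; move: (H i) => /negbFE/eqP.
  have i0 : i != ord0 by apply: contra hi => /eqP ->; rewrite s0.
  apply: (term_zero i0) hi; apply/eqP => E; move/eqP: i0; apply.
  by apply: (@perm_inj _ s); rewrite E s0.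
have j0 : s ord0 != ord0 by apply/eqP.
have sjj : s (s ord0) != s ord0 by apply/eqP => /perm_inj E; move/eqP: j0; apply; rewrite -{1}E.
case: (s (s ord0) =P ord0) => [sj|sj]; last first.
  by apply: (term_zero j0) sjj; apply/eqP.
case: (pickP (fun i => s i != tperm ord0 (s ord0) i)) => [i hi|H]; last first.
  have : s = tperm ord0 (s ord0).
    by apply/permP => i; move: (H i) => /negbFE/eqP.
  have [l El] : exists l, s ord0 = lift ord0 l.
    by case: (unliftP ord0 (s ord0)) j0 => [l ->|->]; [exists l|rewrite eqxx].
  rewrite El => E; move: sT; rewrite E /Tset; move/negP; case.
  by apply: imset_f.
have i0 : i != ord0 by apply: contra hi => /eqP ->; rewrite tpermL.
have ij : i != s ord0 by apply: contra hi => /eqP ->; rewrite tpermR sj.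
move: hi; rewrite tpermD // 1?eq_sym // eq_sym => hi.
apply: (term_zero i0) hi; apply/eqP => E; move/eqP: ij; apply.
by apply: (@perm_inj _ s); rewrite E sj.
Qed.

Lemma detA : \det A = xr m * \prod_(i < m) xleaf i
                     - \sum_(i < m) \prod_(j < m | j != i) xleaf j.
Proof.
rewrite /determinant (bigD1 1%g) //=; congr (_ + _).
  rewrite odd_perm1 expr0 mul1r big_ord_recl perm1 AEdiag; congr (_ * _).
  by apply: eq_bigr => i _; rewrite perm1 AEdiag.
rewrite (bigID (mem Tset)) /= [X in _ + X]big1 ?addr0; last first.
  by move=> s /andP [s1 sT]; rewrite term_zero2 ?mulr0.
rewrite (eq_bigl (mem Tset)); last first.
  move=> s /=; apply: andb_idl => /imsetP [l _ ->]; apply/eqP => /permP /(_ ord0).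
  by rewrite tpermL perm1 => /eqP E; move: (nl0 l); rewrite E.
rewrite big_imset /=; last first.
  move=> l l' _ _ /permP /(_ ord0); rewrite !tpermL; exact: lift_inj.
rewrite -sumrN; apply: eq_bigr => l _.
rewrite odd_tperm nl0' expr1 big_ord_recl tpermL AE0l (bigD1 l) //= tpermR AEl0.
rewrite mulN1r mulN1r mulN1r opprK; congr (- _).
apply: eq_bigr => i il; rewrite tpermD ?AEdiag //.
by apply: contra il => /eqP/lift_inj ->.
Qed.

End Star4.
Lemma kprods_eval m k (p : {mpoly int[m.+1]}) :
  in_ideal (@kprods m k.+1) p -> meval (fun _ => 0) p = 0.
Proof.
move=> [s [Hs ->]]; rewrite rmorph_sum big1_seq //= => q qs.
have [S [cS ->]] := Hs q qs.
rewrite mevalM rmorph_prod.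
have [x xS] : exists x, x \in S by apply/card_gt0P; rewrite cS.
by rewrite (bigD1 x) //= /xleaf mevalXU mul0r mulr0.
Qed.

Unset Implicit Arguments.
Set Strict Implicit.

Theorem theorem5p1 (m : nat) (hm : (3 <= m)%N) :
  gamma_is (@star_mult m) 2
  /\ (forall k : nat, (1 <= k)%N -> (k <= m - 2)%N ->
        ideal_eq (Iminors (@star_mult m) (2 + k))
          (fun p => exists S : {set 'I_m},
               #|S| = k /\ p = \prod_(i in S) xleaf i))
  /\ ideal_eq (Iminors (@star_mult m) m.+1)
       (fun p => p = xr m * \prod_(i < m) xleaf i
                     - \sum_(i < m) \prod_(j < m | j != i) xleaf j).
Proof.
have j0 : 'I_m := Ordinal (leq_trans (isT : (0 < 3)%N) hm).
split; [split|split].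
- rewrite /ideal_trivial /Iminors.
  have := @prod_in m 0 set0 (cards0 _) (leq_trans (isT : (2 <= 3)%N) hm).
  by rewrite big_set0.
- move=> j hj H.
  have [k jk] : exists k, j = k.+3 by exists (j - 3)%N; lia.
  subst j.
  move: H; rewrite /ideal_trivial /Iminors => H.
  have := kprods_eval (in_ideal_trans (@minor_in m j0 k.+1) H).
  by rewrite meval1.
- move=> k k1 km p; have -> : (2 + k = k.+2)%N by [].
  rewrite /Iminors; split.
    apply: in_ideal_trans => q Hq; exact: (in_ideal_trans (@minor_in m j0 k) Hq).
  apply: in_ideal_trans => q [S [cS ->]]; apply: in_ideal_gen; apply: prod_in => //.
  lia.
- move=> p; rewrite /Iminors; split.
    apply: in_ideal_trans => q; apply: in_ideal_trans => {}q [f [g [fi [gi ->]]]].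
    pose pf := perm (incr_inj fi); pose pg := perm (incr_inj gi).
    have -> : mxsub f g (genLap (@star_mult m)) =
              mxsub (id \o pf) (id \o pg) (genLap (@star_mult m)).
      by apply/matrixP => i j; rewrite !mxE /= !permE.
    rewrite det_mxsub_perm mxsub_id detA; apply: in_idealM; exact: in_ideal_gen.
  apply: in_ideal_trans => q ->; rewrite -detA; apply: in_ideal_gen.
  apply: in_ideal_gen; by exists id, id; split => //; rewrite mxsub_id.
Qed.
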